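(* Let $\alpha\in(\frac12,1)$ and run Algorithm 1 on vectors $g_t$ with $\|g_t\|\le G$ and learning rates $$\eta_t=\frac{G^{2\alpha-1}}{\big(2G^2+\sum_{i=1}^{t-1}\|g_i\|^2\big)^\alpha}.$$ Then $S_T\le\sqrt{4+\frac1{2\alpha-1}}$ for every $T\ge0$; in particular $S_\infty=\lim_{T\to\infty}S_T\le\sqrt{4+\frac1{2\alpha-1}}$.
   Context: $\|\cdot\|$ is the Euclidean norm, $G>0$. In Algorithm 1, $S_0^2=4$ and for $t\ge1$, with $\ell_t=\eta_tg_t$, $S_t^2=S_{t-1}^2+\|\ell_t\|^2$ ($S_t>0$). *)

(* Defs.v *)
From HB Require Import structures.
From mathcomp Require Import all_boot all_order all_algebra.
From mathcomp Require Import all_classical all_reals all_analysis.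
Set Implicit Arguments. Unset Strict Implicit. Unset Printing Implicit Defensive.
Import Order.TTheory GRing.Theory Num.Theory.
Local Open Scope ring_scope.

Definition enorm (R : realType) (d : nat) (v : 'rV[R]_d) : R :=
  Num.sqrt (\sum_(i < d) (v ord0 i) ^+ 2).

Definition eta (R : realType) (d : nat) (G alpha : R) (g : nat -> 'rV[R]_d)
  (t : nat) : R :=
  G `^ (2 * alpha - 1) /
  (2 * G ^+ 2 + \sum_(1 <= i < t) enorm (g i) ^+ 2) `^ alpha.

(* S_T with S_0^2 = 4, S_t^2 = S_{t-1}^2 + ||eta_t g_t||^2, S_t > 0 *)
Definition S (R : realType) (d : nat) (G alpha : R) (g : nat -> 'rV[R]_d)
  (T : nat) : R :=
  Num.sqrt (4 + \sum_(1 <= t < T.+1) enorm (eta G alpha g t *: g t) ^+ 2).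

(* Main.v *)
Require Import Defs.
From HB Require Import structures.
From mathcomp Require Import all_boot all_order all_algebra.
From mathcomp Require Import all_classical all_reals all_analysis.
From mathcomp Require Import ring lra.
Import Order.TTheory GRing.Theory Num.Theory.
Import numFieldNormedType.Exports.
Local Open Scope classical_set_scope.
Local Open Scope ring_scope.

Lemma key (R : realType) (p u v : R) : 0 < p -> 0 < u -> u <= v ->
  p * (v - u) / (v `^ (p + 1)) <= u `^ (- p) - v `^ (- p).
Proof.
move=> p0 u0 uv.
have v0 : 0 < v by apply: lt_le_trans uv.
rewrite powRD; last by rewrite (gt_eqF v0) implybT.
rewrite powRr1; last exact: ltW v0.
rewrite /powR (gt_eqF u0) (gt_eqF v0).
set E := expR (- p * ln v).
have hE : expR (p * ln v) = E^-1 by rewrite /E mulNr expRN invrK.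
have hu : expR (- p * ln u) = E * expR (p * (ln v - ln u)).
  by rewrite /E -expRD; congr expR; ring.
rewrite hu hE.
have L : 1 - u / v <= ln v - ln u.
  have := @le_ln1Dx R (u / v - 1).
  rewrite (addrC 1) subrK ln_div ?posrE //.
  have -> : -1 < u / v - 1 by have := divr_gt0 u0 v0; lra.
  move=> /(_ isT) h; lra.
have e1 := expR_ge1Dx (p * (ln v - ln u)).
have E0 : 0 < E by apply: expR_gt0.
have -> : p * (v - u) / (E^-1 * v) = E * p * (1 - u / v).
  by field; rewrite ?gt_eqF ?invr_gt0.
have h1 : p * (1 - u / v) <= expR (p * (ln v - ln u)) - 1.
  have : p * (1 - u / v) <= p * (ln v - ln u) by rewrite ler_pM2l.
  lra.
have := h1; rewrite -(ler_pM2l E0) => h2.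
have -> : E * expR (p * (ln v - ln u)) - E = E * (expR (p * (ln v - ln u)) - 1) by ring.
rewrite -mulrA.
apply: h2.
Qed.


Lemma enorm_ge0 (R : realType) d (v : 'rV[R]_d) : 0 <= enorm v.
Proof. exact: sqrtr_ge0. Qed.

Lemma enorm_sq (R : realType) d (v : 'rV[R]_d) :
  enorm v ^+ 2 = \sum_(i < d) (v ord0 i) ^+ 2.
Proof. by rewrite /enorm sqr_sqrtr // sumr_ge0 // => i _; exact: sqr_ge0. Qed.

Lemma enormZ2 (R : realType) d (c : R) (v : 'rV[R]_d) :
  enorm (c *: v) ^+ 2 = c ^+ 2 * enorm v ^+ 2.
Proof.
rewrite !enorm_sq mulr_sumr; apply: eq_bigr => i _.
by rewrite mxE exprMn.
Qed.

Lemma powR_sq (R : realType) (x y : R) : 0 <= x -> (x `^ y) ^+ 2 = x `^ (y * 2).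
Proof. move=> x0; by rewrite powRrM -powR_mulrn ?powR_ge0. Qed.

Theorem lemma22 (R : realType) (d : nat) (G alpha : R) (g : nat -> 'rV[R]_d)
  (hG : 0 < G) (halpha : 2^-1 < alpha < 1)
  (hg : forall t : nat, (1 <= t)%N -> enorm (g t) <= G) :
  (forall T : nat, S G alpha g T <= Num.sqrt (4 + (2 * alpha - 1)^-1)) /\
  (cvg (S G alpha g @ \oo) /\
   lim (S G alpha g @ \oo) <= Num.sqrt (4 + (2 * alpha - 1)^-1)).
Proof.
set p := 2 * alpha - 1.
have [h1 h2] : 2^-1 < alpha /\ alpha < 1 by apply/andP.
have p0 : 0 < p by rewrite /p; lra.
set a := fun t => enorm (g t) ^+ 2.
have a0 : forall t, 0 <= a t by move=> t; rewrite /a sqr_ge0.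
have aG : forall t, (1 <= t)%N -> a t <= G ^+ 2.
  move=> t ht; rewrite /a; have := hg t ht; have := @enorm_ge0 R d (g t); nra.
set Q := fun t => G ^+ 2 + \sum_(1 <= i < t) a i.
have Qge : forall t, G ^+ 2 <= Q t.
  by move=> t; rewrite /Q lerDl sumr_ge0.
have G20 : 0 < G ^+ 2 by rewrite exprn_gt0.
have Q0 : forall t, 0 < Q t by move=> t; exact: lt_le_trans (Qge t).
set term := fun t => enorm (Defs.eta G alpha g t *: g t) ^+ 2.
have term0 : forall t, 0 <= term t by move=> t; exact: sqr_ge0.
set c := G `^ (p * 2) / p.
have step : forall t, (1 <= t)%N -> term t <= c * (Q t `^ (- p) - Q t.+1 `^ (- p)).
  move=> t ht.
  have QS : Q t.+1 = Q t + a t by rewrite /Q big_nat_recr //= addrA.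
  have etaE : Defs.eta G alpha g t = G `^ p / (Q t + G ^+ 2) `^ alpha.
    by rewrite /Defs.eta /Q; congr (_ / _ `^ _); ring.
  have P0 : 0 < Q t + G ^+ 2 by rewrite addr_gt0.
  have vP : Q t.+1 <= Q t + G ^+ 2 by rewrite QS lerD2l aG.
  rewrite /term enormZ2 etaE expr_div_n !powR_sq ?powR_ge0 ?(ltW hG) ?(ltW P0) //.
  have -> : alpha * 2 = p + 1 by rewrite /p; ring.
  have K := @key R p (Q t) (Q t.+1) p0 (Q0 t) (ltac:(by rewrite QS lerDl)).
  have e : Q t + a t - Q t = a t by ring.
  rewrite QS e in K.
  have v0 : 0 < Q t + a t by rewrite -QS.
  have vP' : Q t + a t <= Q t + G ^+ 2 by rewrite -QS.
  have Kv : 0 < (Q t + a t) `^ (p + 1) by rewrite powR_gt0.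
  have KP : 0 < (Q t + G ^+ 2) `^ (p + 1) by rewrite powR_gt0.
  have mono : (Q t + a t) `^ (p + 1) <= (Q t + G ^+ 2) `^ (p + 1).
    apply: ge0_ler_powR => //; last by rewrite nnegrE ltW.
      by apply: ltW; rewrite addr_gt0.
    by rewrite nnegrE ltW.
  have inv : a t / (Q t + G ^+ 2) `^ (p + 1) <= a t / (Q t + a t) `^ (p + 1).
    by rewrite ler_wpM2l // lef_pV2 ?posrE.
  change (enorm (g t) ^+ 2) with (a t).
  rewrite QS /c.
  have Gp0 : 0 <= G `^ (p * 2) by apply: powR_ge0.
  have K' : a t / (Q t + a t) `^ (p + 1) <= (Q t `^ (- p) - (Q t + a t) `^ (- p)) / p.
    rewrite ler_pdivlMr // mulrC mulrA; exact: K.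
  have H := le_trans inv K'.
  have := ler_wpM2l Gp0 H.
  have -> : G `^ (p * 2) * (a t / (Q t + G ^+ 2) `^ (p + 1)) =
    G `^ (p * 2) / (Q t + G ^+ 2) `^ (p + 1) * a t by ring.
  by have -> : G `^ (p * 2) * ((Q t `^ (- p) - (Q t + a t) `^ (- p)) / p) =
    G `^ (p * 2) / p * (Q t `^ (- p) - (Q t + a t) `^ (- p)) by ring.
have tele : forall T, \sum_(1 <= t < T.+1) term t <= c * (Q 1 `^ (- p) - Q T.+1 `^ (- p)).
  elim=> [|T IH].
    by rewrite big_geq // subrr mulr0.
  rewrite big_nat_recr //=.
  have := step T.+1 isT.
  have -> : c * (Q 1 `^ (- p) - Q T.+2 `^ (- p)) =
    c * (Q 1 `^ (- p) - Q T.+1 `^ (- p)) + c * (Q T.+1 `^ (- p) - Q T.+2 `^ (- p)) by ring.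
  by move=> h; apply: lerD.
have c0 : 0 <= c by rewrite /c divr_ge0 ?powR_ge0 ?ltW.
have Q1 : Q 1 = G ^+ 2 by rewrite /Q big_geq // addr0.
have cQ : c * Q 1 `^ (- p) = p^-1.
  rewrite Q1 /c powRN -powR_mulrn ?ltW // -powRrM.
  have Gp : 0 < G `^ (2%:R * p) by rewrite powR_gt0.
  rewrite [p * 2]mulrC; field; rewrite ?gt_eqF //.
have sumb : forall T, \sum_(1 <= t < T.+1) term t <= p^-1.
  move=> T; apply: le_trans (tele T) _.
  rewrite -cQ ler_wpM2l // lerBlDr lerDl; exact: powR_ge0.
have sum0 : forall T, 0 <= \sum_(1 <= t < T.+1) term t.
  by move=> T; apply: sumr_ge0 => t _.
have bound : forall T, S G alpha g T <= Num.sqrt (4 + p^-1).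
  move=> T; rewrite /S ler_sqrt; last by rewrite addr_ge0 // invr_ge0 ltW.
  by rewrite lerD2l; exact: sumb.
have mon : forall n, S G alpha g n <= S G alpha g n.+1.
  move=> n; rewrite /S ler_sqrt; last by rewrite addr_ge0 // -/term.
  rewrite lerD2l -/term [X in _ <= X]big_nat_recr //= lerDl; exact: term0.
have hc : cvg (S G alpha g @ \oo).
  apply: nondecreasing_is_cvgn; first exact/nondecreasing_seqP.
  by exists (Num.sqrt (4 + p^-1)) => _ [n _ <-]; exact: bound.
split => //; split => //.
apply: limr_le => //; apply: filterE => n; exact: bound.
Qed.
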